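(* Let $m\ge 2$. The following random substitution subshifts are semi-mixing: (1) the random Fibonacci subshift $X_1 = X_{\vartheta_1}$, with respect to $\mathcal{S}_1=\{ab,ba\}$; (2) the random tribonacci subshift $X_\tau$, with respect to $\mathcal{S}_\tau=\{ab,ba,ac,ca\}$; (3) the degree-$m$ random metallic mean subshift $X_m = X_{\vartheta_m}$, with respect to $\mathcal{S}_m=\{a^iba^{m-i}\mid 0\le i\le m\}$.
   Context: Words: for a finite alphabet $\mathcal{A}$, $\mathcal{A}^+$ is the set of non-empty finite words; $u^i$ is the $i$-fold concatenation ($u^0$ the empty word); $v\prec w$ means $v$ is a (contiguous) subword of $w$. For sets of words $A,B$, $AB=\{uv\mid u\in A, v\in B\}$. A random substitution is a map $\vartheta$ assigning to each letter $a\in\mathcal{A}$ a non-empty finite set $\vartheta(a)\subseteq\mathcal{A}^+$; it is extended to words by $\vartheta(w_1\cdots w_k)=\vartheta(w_1)\cdots\vartheta(w_k)$ (set concatenation) and to sets by $\vartheta(A)=\bigcup_{w\in A}\vartheta(w)$; $\vartheta^k$ denotes the $k$-fold iterate. A word $u$ is $\vartheta$-legal if there are $k\ge 0$, a letter $a$ and $w\in\vartheta^k(a)$ with $u\prec w$. The RS-subshift is $X_\vartheta=\{x\in\mathcal{A}^{\mathbb{Z}}\mid \text{every finite subword of } x \text{ is } \vartheta\text{-legal}\}$ with the left shift $\sigma$. Its language $\mathcal{L}$ is the set of all finite subwords of elements of $X_\vartheta$, and $\mathcal{L}^\ell$ the set of those of length $\ell$. Semi-mixing (symbolic form, equivalent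 to the dynamical definition: there is a proper clopen $U$ such that for every nonempty open $V$ there is $N$ with $\sigma^n(V)\cap U\neq\varnothing$ for all $n\ge N$): a subshift is semi-mixing with respect to a set $\mathcal{S}\subsetneq\mathcal{L}^\ell$ (for some length $\ell$) if for every $w\in\mathcal{L}$ there is $N\in\mathbb{N}$ such that for every $n\ge N$ there exist a word $u$ of length $n$ and $s\in\mathcal{S}$ with $wus\in\mathcal{L}$. Random Fibonacci substitution on $\{a,b\}$: $\vartheta_1\colon a\mapsto\{ab,ba\},\ b\mapsto\{a\}$. Random tribonacci substitution on $\{a,b,c\}$: $\tau\colon a\mapsto\{ab,ba\},\ b\mapsto\{ac,ca\},\ c\mapsto\{a\}$. Degree-$m$ random metallic mean substitution on $\{a,b\}$: $\vartheta_m\colon a\mapsto\{a^iba^{m-i}\mid 0\le i\le m\},\ b\mapsto\{a\}$. *)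

(* Defs.v *)
From HB Require Import structures.
From mathcomp Require Import all_boot all_order all_algebra.
Set Implicit Arguments. Unset Strict Implicit. Unset Printing Implicit Defensive.
Import GRing.Theory Num.Theory.

Definition rsubst (A : eqType) := A -> seq (seq A).

Fixpoint in_subst (A : eqType) (th : rsubst A) (w v : seq A) : Prop :=
  match w with
  | [::] => v = [::]
  | c :: w' => exists p q, [/\ v = p ++ q, p \in th c & in_subst th w' q]
  end.

Fixpoint in_subst_iter (A : eqType) (th : rsubst A) (k : nat) (w v : seq A) : Prop :=
  match k with
  | 0 => v = w
  | k'.+1 => exists v', in_subst_iter th k' w v' /\ in_subst th v' v
  end.

Definition legal (A : eqType) (th : rsubst A) (u : seq A) : Prop :=
  exists k (c : A) w, in_subst_iter th k [:: c] w /\ infix u w.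

Definition subword (A : Type) (x : int -> A) (i : int) (n : nat) : seq A :=
  mkseq (fun k => x (i + k%:Z)%R) n.

Definition in_RS_subshift (A : eqType) (th : rsubst A) (x : int -> A) : Prop :=
  forall i n, legal th (subword x i n).

Definition lang (A : eqType) (th : rsubst A) (w : seq A) : Prop :=
  exists x, in_RS_subshift th x /\ exists i, w = subword x i (size w).

Definition semi_mixing_wrt (A : eqType) (th : rsubst A) (S : seq (seq A)) : Prop :=
  exists l : nat,
    (forall s, s \in S -> size s = l /\ lang th s) /\
    (exists w, size w = l /\ lang th w /\ w \notin S) /\
    (forall w, lang th w -> exists N : nat, forall n, N <= n ->
       exists u s, [/\ size u = n, s \in S & lang th (w ++ u ++ s)]).

Inductive ab := a_ | b_.
Definition ab_eqb (x y : ab) : bool :=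
  match x, y with a_, a_ | b_, b_ => true | _, _ => false end.
Lemma ab_eqP : Equality.axiom ab_eqb.
Proof. by case; case; constructor. Qed.
HB.instance Definition _ := hasDecEq.Build ab ab_eqP.

Inductive abc := a3 | b3 | c3.
Definition abc_eqb (x y : abc) : bool :=
  match x, y with a3, a3 | b3, b3 | c3, c3 => true | _, _ => false end.
Lemma abc_eqP : Equality.axiom abc_eqb.
Proof. by case; case; constructor. Qed.
HB.instance Definition _ := hasDecEq.Build abc abc_eqP.

Definition fib_subst : rsubst ab :=
  fun c => match c with a_ => [:: [:: a_; b_]; [:: b_; a_]] | b_ => [:: [:: a_]] end.

Definition trib_subst : rsubst abc :=
  fun c => match c with
  | a3 => [:: [:: a3; b3]; [:: b3; a3]]
  | b3 => [:: [:: a3; c3]; [:: c3; a3]]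
  | c3 => [:: [:: a3]] end.

Definition metallic_words (m : nat) : seq (seq ab) :=
  [seq nseq i a_ ++ b_ :: nseq (m - i) a_ | i <- iota 0 m.+1].

Definition metallic_subst (m : nat) : rsubst ab :=
  fun c => match c with a_ => metallic_words m | b_ => [:: [:: a_]] end.

(* Main.v *)
Require Import Defs.
From mathcomp Require Import all_boot all_algebra zify.
Set Implicit Arguments. Unset Strict Implicit. Unset Printing Implicit Defensive.

Definition rw (A : Type) (rho : A -> seq A) (w : seq A) := flatten (map rho w).

Lemma rw_cat (A : Type) (rho : A -> seq A) w1 w2 :
  rw rho (w1 ++ w2) = rw rho w1 ++ rw rho w2.
Proof. by rewrite /rw map_cat flatten_cat. Qed.

Lemma rw_cons (A : Type) (rho : A -> seq A) c w :
  rw rho (c :: w) = rho c ++ rw rho w.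
Proof. by []. Qed.

Lemma iter_rw_cat (A : Type) (rho : A -> seq A) k w1 w2 :
  iter k (rw rho) (w1 ++ w2) = iter k (rw rho) w1 ++ iter k (rw rho) w2.
Proof. by elim: k => //= k ->; rewrite rw_cat. Qed.

Lemma size_rw (A : Type) (rho : A -> seq A) w :
  (forall c, 0 < size (rho c)) -> size w <= size (rw rho w).
Proof.
move=> H; elim: w => //= c w IH; rewrite size_cat.
have := H c; move: (size (rho c)) => n Hn; rewrite -add1n; exact: leq_add.
Qed.

Lemma size_iter_rw (A : Type) (rho : A -> seq A) k w :
  (forall c, 0 < size (rho c)) -> size w <= size (iter k (rw rho) w).
Proof.
move=> H; elim: k => //= k IH; exact: leq_trans IH (size_rw _ H).
Qed.

Lemma isc (A : eqType) (th : rsubst A) c p w q :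
  p \in th c -> in_subst th w q -> in_subst th (c :: w) (p ++ q).
Proof. by move=> Hp Hq; exists p, q. Qed.

Lemma in_subst_cat (A : eqType) (th : rsubst A) w1 w2 v1 v2 :
  in_subst th w1 v1 -> in_subst th w2 v2 -> in_subst th (w1 ++ w2) (v1 ++ v2).
Proof.
elim: w1 v1 => [|c w IH] v1 /=; first by move=> ->.
move=> [p [q [-> Hp Hq]]] H2; exists p, (q ++ v2); split => //.
  by rewrite catA.
exact: IH.
Qed.

Lemma in_subst_iter_cat (A : eqType) (th : rsubst A) k w1 w2 v1 v2 :
  in_subst_iter th k w1 v1 -> in_subst_iter th k w2 v2 ->
  in_subst_iter th k (w1 ++ w2) (v1 ++ v2).
Proof.
elim: k v1 v2 => [|k IH] v1 v2 /=; first by move=> -> ->.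
move=> [x [H1 H1']] [y [H2 H2']]; exists (x ++ y); split.
  exact: IH. exact: in_subst_cat.
Qed.

Lemma in_subst_iter_trans (A : eqType) (th : rsubst A) j k w v u :
  in_subst_iter th j w v -> in_subst_iter th k v u ->
  in_subst_iter th (k + j) w u.
Proof.
move=> Hj; elim: k u => [|k IH] u /=; first by move=> ->.
by move=> [x [Hx Hxu]]; exists x; split => //; apply: IH.
Qed.

Lemma in_subst_rw (A : eqType) (th : rsubst A) rho w :
  (forall c, rho c \in th c) -> in_subst th w (rw rho w).
Proof. move=> H; elim: w => //= c w IH; exact: isc. Qed.

Lemma in_subst_iter_rw (A : eqType) (th : rsubst A) rho k w :
  (forall c, rho c \in th c) -> in_subst_iter th k w (iter k (rw rho) w).
Proof.
move=> H; elim: k => //= k IH; exists (iter k (rw rho) w); split => //.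
exact: in_subst_rw.
Qed.

Lemma one_step (A : eqType) (th : rsubst A) c s :
  s \in th c -> in_subst_iter th 1 [:: c] s.
Proof. move=> H; exists [:: c]; split => //; exists s, [::]; rewrite cats0; by split. Qed.

Lemma legal_of (A : eqType) (th : rsubst A) K c R u :
  in_subst_iter th K [:: c] R -> infix u R -> legal th u.
Proof. by move=> H1 H2; exists K, c, R. Qed.

Lemma legal_infix (A : eqType) (th : rsubst A) w u :
  legal th w -> infix u w -> legal th u.
Proof.
move=> [K [c [R [H1 H2]]]] H; exists K, c, R; split => //; exact: infix_trans H H2.
Qed.

Fixpoint off (A : Type) (Pf : nat -> seq A) i :=
  match i with 0 => 0 | i.+1 => off Pf i + size (Pf i) end.

Lemma mkseq_nthD (A : Type) (d : A) s b n :
  b + n <= size s -> mkseq (fun k => nth d s (b + k)) n = take n (drop b s).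
Proof.
move=> H; apply: (@eq_from_nth _ d).
  by rewrite size_mkseq size_take size_drop; case: ltnP => //; lia.
move=> k; rewrite size_mkseq => Hk.
by rewrite nth_mkseq // nth_take // nth_drop.
Qed.

Lemma nested_lang (A : eqType) (th : rsubst A) (d : A) (W Pf Sf : nat -> seq A) :
  (forall i, W i.+1 = Pf i ++ W i ++ Sf i) -> (forall i, 0 < size (Pf i)) ->
  (forall i, 0 < size (Sf i)) -> (forall i, legal th (W i)) ->
  forall u, infix u (W 0) -> lang th u.
Proof.
move=> HW HP HS HL u Hu.
have offge i : i <= off Pf i.
  by elim: i => //= i IH; have := HP i; lia.
have sizeW i : off Pf i + i <= size (W i).
  elim: i => [|i IH] /=; first by [].
  by rewrite HW !size_cat; have := HP i; have := HS i; lia.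
have dec i j : exists Pre Suf, W (j + i) = Pre ++ W i ++ Suf /\
    size Pre + off Pf i = off Pf (j + i).
  elim: j => [|j [Pre [Suf [E1 E2]]]]; first by exists [::], [::]; rewrite cats0.
  exists (Pf (j + i) ++ Pre), (Suf ++ Sf (j + i)); split.
    by rewrite addSn HW E1 !catA.
  by rewrite addSn /= size_cat -E2; lia.
pose x (z : int) := nth d (W (absz z).+1) (absz (z + (off Pf (absz z).+1)%:Z)%R).
have xE z M : absz z < M -> x z = nth d (W M) (absz (z + (off Pf M)%:Z)%R).
  move=> HM; rewrite /x.
  have [Pre [Suf [E1 E2]]] := dec (absz z).+1 (M - (absz z).+1).
  have EM : M - (absz z).+1 + (absz z).+1 = M by lia.
  rewrite EM in E1 E2; rewrite E1.
  have h1 := offge (absz z).+1; have h2 := sizeW (absz z).+1.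
  have -> : absz (z + (off Pf M)%:Z)%R = size Pre + absz (z + (off Pf (absz z).+1)%:Z)%R.
    lia.
  rewrite nth_cat ltnNge leq_addr /= addKn nth_cat ifT //; move: h1 h2 => /= h1 h2; lia.
have sub i n : subword x i n = take n (drop (absz (i + (off Pf (absz i + n).+1)%:Z)%R) (W (absz i + n).+1)).
  rewrite /subword -(mkseq_nthD d); last first.
    by have := offge (absz i + n).+1; have := sizeW (absz i + n).+1; lia.
  rewrite /mkseq; apply/eq_in_map => k; rewrite mem_iota => /andP[_ Hk]; rewrite (xE _ (absz i + n).+1); last by lia.
  congr nth; have := offge (absz i + n).+1; lia.
exists x; split.
  move=> i n; rewrite sub; apply: legal_infix (HL _) _.
  set b := absz _; rewrite -[X in infix _ X](cat_take_drop b).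
  by apply: infix_catl; apply: infix_take.
move/infixP: Hu => [s1 [s2 E]].
exists (Posz (size s1)); rewrite sub.
change (absz (Posz (size s1))) with (size s1).
have [Pre [Suf [E1 E2]]] := dec 0 (size s1 + size u).+1.
rewrite addn0 in E1 E2; rewrite E1 E.
have -> : absz ((size s1)%:Z + (off Pf (size s1 + size u).+1)%:Z)%R = size Pre + size s1.
  by rewrite -E2 [off Pf 0]/=; lia.
by rewrite -catA addnC -drop_drop drop_size_cat // drop_size_cat // -catA take_size_cat.
Qed.

Fixpoint Wseq (A : Type) (R : seq A) (Pf Sf : nat -> seq A) i :=
  match i with 0 => R | i.+1 => Pf i ++ Wseq R Pf Sf i ++ Sf i end.

Lemma iter_size (A : Type) (f : seq A -> seq A) i w :
  (forall w, size w <= size (f w)) -> size w <= size (iter i f w).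
Proof. move=> H; elim: i => //= i IH; exact: leq_trans IH (H _). Qed.

Lemma iter_catm (A : Type) (f : seq A -> seq A) i x y :
  (forall x y, f (x ++ y) = f x ++ f y) -> iter i f (x ++ y) = iter i f x ++ iter i f y.
Proof. by move=> H; elim: i => //= i ->. Qed.

Lemma lang_real (A : eqType) (th : rsubst A) rho a0 ps P0 S0 :
  (forall c, rho c \in th c) -> (forall c, 0 < size (rho c)) ->
  iter ps (rw rho) [:: a0] = P0 ++ a0 :: S0 -> 0 < size P0 -> 0 < size S0 ->
  forall K R u, in_subst_iter th K [:: a0] R -> infix u R -> lang th u.
Proof.
move=> Hth Hne Hsig HP HS K R u HR Hu.
pose sig := iter ps (rw rho).
have sigcat x y : sig (x ++ y) = sig x ++ sig y by apply: iter_rw_cat.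
have sigsz w : size w <= size (sig w) by apply: size_iter_rw.
pose Pf i := iter K (rw rho) (iter i sig P0).
pose Sf i := iter K (rw rho) (iter i sig S0).
pose W := Wseq R Pf Sf.
have inv i : in_subst_iter th K (iter i sig [:: a0]) (W i).
  elim: i => [|i IH] //=.
  have Hs : sig [:: a0] = P0 ++ a0 :: S0 := Hsig.
  rewrite -/(iter i.+1 sig [:: a0]) iterSr Hs -cat1s catA !iter_catm //.
  have -> : W i.+1 = (Pf i ++ W i) ++ Sf i by rewrite /W /= catA.
  apply: in_subst_iter_cat; last exact: in_subst_iter_rw.
  apply: in_subst_iter_cat => //; exact: in_subst_iter_rw.
have lg i : in_subst_iter th (i * ps) [:: a0] (iter i sig [:: a0]).
  elim: i => [|i IH] //; rewrite mulSn iterS.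
  apply: in_subst_iter_trans IH _; exact: in_subst_iter_rw.
apply: (nested_lang a0 (W := W) (Pf := Pf) (Sf := Sf)) => //.
- move=> i; apply: leq_trans HP _; apply: (leq_trans (iter_size i P0 sigsz)).
  exact: size_iter_rw.
- move=> i; apply: leq_trans HS _; apply: (leq_trans (iter_size i S0 sigsz)).
  exact: size_iter_rw.
- move=> i; apply: (legal_of (K := K + i * ps) (c := a0) (R := W i)) => //.
  exact: in_subst_iter_trans (lg i) (inv i).
exact: infix_refl.
Qed.

Lemma lang_legal (A : eqType) (th : rsubst A) w : lang th w -> legal th w.
Proof. by move=> [x [Hx [i ->]]]; apply: Hx. Qed.

Lemma legal_decomp (A : eqType) (th : rsubst A) rho a0 w :
  (forall c, rho c \in th c) -> (forall c, c \in iter 2 (rw rho) [:: a0]) ->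
  legal th w -> exists k v1 v, [/\ in_subst_iter th k.+1 [:: a0] v1,
     in_subst th v1 v & infix w v].
Proof.
move=> Hth Hlet [K0 [c [R0 [HR0 Hw]]]].
have [E1 [E2 HE]] : exists E1 E2, iter 2 (rw rho) [:: a0] = E1 ++ c :: E2.
  by case/splitPr: (Hlet c) => E1 E2; exists E1, E2.
have HV : in_subst_iter th (K0 + 2) [:: a0]
    (iter K0 (rw rho) E1 ++ R0 ++ iter K0 (rw rho) E2).
  apply: (in_subst_iter_trans (v := iter 2 (rw rho) [:: a0])).
    exact: in_subst_iter_rw.
  rewrite HE -cat1s; apply: in_subst_iter_cat; first exact: in_subst_iter_rw.
  apply: in_subst_iter_cat => //; exact: in_subst_iter_rw.
rewrite addn2 in HV; case: HV => v1 [Hv1 Hv].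
exists K0, v1, (iter K0 (rw rho) E1 ++ R0 ++ iter K0 (rw rho) E2); split; [exact: Hv1 | exact: Hv |].
apply: infix_trans Hw _; apply: infix_catl; exact: prefix_infix.
Qed.

Lemma iter_head (A : eqType) (rho : A -> seq A) a0 t j :
  rho a0 = a0 :: t -> 0 < size t -> (forall c, 0 < size (rho c)) ->
  exists D2, iter j (rw rho) [:: a0] = a0 :: D2 /\ j <= size D2.
Proof.
move=> Ha Ht Hne; elim: j => [|j [D2 [E Hs]]]; first by exists [::].
exists (t ++ rw rho D2); split; first by rewrite iterS E rw_cons Ha.
rewrite size_cat; have := size_rw D2 Hne; lia.
Qed.

Lemma part_c (A : eqType) (th : rsubst A) rho a0 t ps P0 S0 l (S : seq (seq A)) :
  (forall c, rho c \in th c) -> (forall c, 0 < size (rho c)) ->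
  rho a0 = a0 :: t -> 0 < size t ->
  (forall c, c \in iter 2 (rw rho) [:: a0]) ->
  iter ps (rw rho) [:: a0] = P0 ++ a0 :: S0 -> 0 < size P0 -> 0 < size S0 ->
  (forall Y p, p + l <= size Y -> exists T1 s T2,
     [/\ in_subst th (rw rho Y) (T1 ++ s ++ T2), size T1 = p & s \in S]) ->
  forall w, lang th w -> exists N : nat, forall n, N <= n ->
       exists u s, [/\ size u = n, s \in S & lang th (w ++ u ++ s)].
Proof.
move=> Hth Hne Ha Ht Hlet Hsig HP HS Hhost w /lang_legal Hw.
have [k [v1 [v [Hv1 Hv Hwv]]]] := legal_decomp Hth Hlet Hw.
move/infixP: Hwv => [vp [vs Ev]].
exists (size vs) => n Hn.
pose p := n - size vs.
have [D2 [ED Hsz]] := iter_head (p + l) Ha Ht Hne.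
pose Y := iter k (rw rho) D2.
have [T1 [s [T2 [HT HT1 Hs]]]] := Hhost Y p (leq_trans Hsz (@size_iter_rw _ rho k D2 Hne)).
exists (vs ++ T1), s; split => //.
  by rewrite size_cat HT1 /p; lia.
have HR : in_subst_iter th (k.+2 + (p + l)) [:: a0] (v ++ T1 ++ s ++ T2).
  apply: in_subst_iter_trans (@in_subst_iter_rw _ th rho (p + l) [:: a0] Hth) _.
  rewrite ED; exists (v1 ++ rw rho Y); split.
    rewrite -cat1s; apply: in_subst_iter_cat => //.
    by rewrite /Y -iterS; apply: in_subst_iter_rw.
  exact: in_subst_cat.
apply: (lang_real Hth Hne Hsig HP HS HR).
rewrite Ev -!catA; apply: infix_catl; rewrite !catA; apply: prefixW.
by apply/prefixP; exists T2.
Qed.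

Lemma host_gen (A : eqType) (th : rsubst A) rho a0 l (S : seq (seq A)) :
  (forall c, rho c \in th c) -> (forall c, 0 < size (rho c)) ->
  (forall c, exists t, rho c = a0 :: t) -> 2 <= l ->
  (forall y r p, p < size (rw rho (rho y)) -> exists T1 s T2,
     [/\ in_subst th (rho y ++ a0 :: r) (T1 ++ s ++ T2), size T1 = p & s \in S]) ->
  forall Y p, p + l <= size Y -> exists T1 s T2,
     [/\ in_subst th (rw rho Y) (T1 ++ s ++ T2), size T1 = p & s \in S].
Proof.
move=> Hth Hne Hhd Hl Hloc; elim => [|y Y IH] p /=; first by lia.
move=> Hp; rewrite rw_cons.
case: (ltnP p (size (rw rho (rho y)))) => Hpy.
  case: Y IH Hp => [|y' Y''] _ Hp; first by move: Hp => /=; lia.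
  have [t Et] := Hhd y'; rewrite rw_cons Et cat_cons; exact: Hloc.
have Hsz : 0 < size (rw rho (rho y)).
  by apply: leq_trans (Hne y) _; apply: size_rw.
have [T1 [s [T2 [H1 H2 H3]]]] := IH (p - size (rw rho (rho y))) ltac:(lia).
exists (rw rho (rho y) ++ T1), s, T2; split => //.
  rewrite -catA; apply: in_subst_cat => //; exact: in_subst_rw.
by rewrite size_cat H2; lia.
Qed.

Lemma isc2 (A : eqType) (th : rsubst A) rho c1 c2 p1 p2 r :
  (forall c, rho c \in th c) -> p1 \in th c1 -> p2 \in th c2 ->
  in_subst th (c1 :: c2 :: r) (p1 ++ p2 ++ rw rho r).
Proof. by move=> H H1 H2; apply: isc H1 _; apply: isc H2 _; apply: in_subst_rw. Qed.

Lemma isc3 (A : eqType) (th : rsubst A) rho c1 c2 c3 p1 p2 p3 r :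
  (forall c, rho c \in th c) -> p1 \in th c1 -> p2 \in th c2 -> p3 \in th c3 ->
  in_subst th (c1 :: c2 :: c3 :: r) (p1 ++ p2 ++ p3 ++ rw rho r).
Proof. by move=> H H1 H2 H3; apply: isc H1 _; apply: isc2. Qed.

Lemma semi_gen (A : eqType) (th : rsubst A) rho a0 t ps P0 S0 l (S : seq (seq A)) :
  (forall c, rho c \in th c) -> (forall c, 0 < size (rho c)) ->
  rho a0 = a0 :: t -> 0 < size t ->
  (forall c, exists t, rho c = a0 :: t) -> 2 <= l ->
  (forall c, c \in iter 2 (rw rho) [:: a0]) ->
  iter ps (rw rho) [:: a0] = P0 ++ a0 :: S0 -> 0 < size P0 -> 0 < size S0 ->
  (forall y r p, p < size (rw rho (rho y)) -> exists T1 s T2,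
     [/\ in_subst th (rho y ++ a0 :: r) (T1 ++ s ++ T2), size T1 = p & s \in S]) ->
  (forall s, s \in S -> size s = l /\ exists K R, in_subst_iter th K [:: a0] R /\ infix s R) ->
  (exists w, [/\ size w = l, w \notin S & exists K R, in_subst_iter th K [:: a0] R /\ infix w R]) ->
  semi_mixing_wrt th S.
Proof.
move=> Hth Hne Ha Ht Hhd Hl Hlet Hsig HP HS Hloc HSl [w0 [Hw0 Hw0S [K [R [HR HwR]]]]].
exists l; split; [|split].
- move=> s /HSl [-> [K' [R' [H1 H2]]]]; split => //.
  move: (lang_real Hth Hne Hsig HP HS H1 H2) => HH; exact HH.
- exists w0; split => //; split => //.
  move: (lang_real Hth Hne Hsig HP HS HR HwR) => HH; exact HH.
- apply: (part_c Hth Hne Ha Ht Hlet Hsig HP HS).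
  exact: host_gen Hth Hne Hhd Hl Hloc.
Qed.

Definition rho_fib (c : ab) : seq ab :=
  match c with a_ => [:: a_; b_] | b_ => [:: a_] end.

Lemma fib_ok : semi_mixing_wrt fib_subst [:: [:: a_; b_]; [:: b_; a_]].
Proof.
have Hth : forall c, rho_fib c \in fib_subst c by case.
apply: (semi_gen (rho := rho_fib) (a0 := a_) (t := [:: b_]) (ps := 3)
   (P0 := [:: a_; b_]) (S0 := [:: a_; b_]) (l := 2)) => //.
- by case.
- by case; eexists.
- by case.
- case=> r [|[|[|p]]] //= _.
  + exists [::], [:: a_; b_], ([:: a_] ++ [:: a_; b_] ++ rw rho_fib r); split => //.
    exact (@isc3 _ _ _ a_ b_ a_ [:: a_; b_] [:: a_] [:: a_; b_] r Hth erefl erefl erefl).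
  + exists [:: a_], [:: b_; a_], ([:: a_; b_] ++ rw rho_fib r); split => //.
    exact (@isc3 _ _ _ a_ b_ a_ [:: a_; b_] [:: a_] [:: a_; b_] r Hth erefl erefl erefl).
  + exists [:: a_; b_], [:: a_; b_], ([:: a_] ++ rw rho_fib r); split => //.
    exact (@isc3 _ _ _ a_ b_ a_ [:: a_; b_] [:: a_] [:: b_; a_] r Hth erefl erefl erefl).
  + exists [::], [:: a_; b_], ([:: a_; b_] ++ rw rho_fib r); split => //.
    exact (@isc2 _ _ _ a_ a_ [:: a_; b_] [:: a_; b_] r Hth erefl erefl).
  + exists [:: a_], [:: b_; a_], ([:: b_] ++ rw rho_fib r); split => //.
    exact (@isc2 _ _ _ a_ a_ [:: a_; b_] [:: a_; b_] r Hth erefl erefl).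
- move=> s Hs; split; first by move: Hs; rewrite !inE => /orP[] /eqP ->.
  exists 1, s; split; [exact: one_step | exact: infix_refl].
- exists [:: a_; a_]; split => //; exists 2, [:: a_; a_; b_]; split; last by [].
  apply: (in_subst_iter_trans (j := 1) (k := 1) (v := [:: b_; a_])); first exact: one_step.
  exists [:: b_; a_]; split => //.
  exact (@isc2 _ _ _ b_ a_ [:: a_] [:: a_; b_] [::] Hth erefl erefl).
Qed.

Definition rho_trib (c : abc) : seq abc :=
  match c with a3 => [:: a3; b3] | b3 => [:: a3; c3] | c3 => [:: a3] end.

Lemma trib_ok : semi_mixing_wrt trib_subst
        [:: [:: a3; b3]; [:: b3; a3]; [:: a3; c3]; [:: c3; a3]].
Proof.
have Hth : forall c, rho_trib c \in trib_subst c by case.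
apply: (semi_gen (rho := rho_trib) (a0 := a3) (t := [:: b3]) (ps := 3)
   (P0 := [:: a3; b3]) (S0 := [:: c3; a3; b3; a3]) (l := 2)) => //.
- by case.
- by case; eexists.
- by case.
- case=> r [|[|[|[|p]]]] //= _.
  + exists [::], [:: a3; b3], ([:: a3; c3] ++ [:: a3; b3] ++ rw rho_trib r); split => //.
    exact (@isc3 _ _ _ a3 b3 a3 [:: a3; b3] [:: a3; c3] [:: a3; b3] r Hth erefl erefl erefl).
  + exists [:: a3], [:: b3; a3], ([:: c3] ++ [:: a3; b3] ++ rw rho_trib r); split => //.
    exact (@isc3 _ _ _ a3 b3 a3 [:: a3; b3] [:: a3; c3] [:: a3; b3] r Hth erefl erefl erefl).
  + exists [:: a3; b3], [:: a3; c3], ([:: a3; b3] ++ rw rho_trib r); split => //.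
    exact (@isc3 _ _ _ a3 b3 a3 [:: a3; b3] [:: a3; c3] [:: a3; b3] r Hth erefl erefl erefl).
  + exists [:: a3; b3; a3], [:: c3; a3], ([:: b3] ++ rw rho_trib r); split => //.
    exact (@isc3 _ _ _ a3 b3 a3 [:: a3; b3] [:: a3; c3] [:: a3; b3] r Hth erefl erefl erefl).
  + exists [::], [:: a3; b3], ([:: a3] ++ [:: a3; b3] ++ rw rho_trib r); split => //.
    exact (@isc3 _ _ _ a3 c3 a3 [:: a3; b3] [:: a3] [:: a3; b3] r Hth erefl erefl erefl).
  + exists [:: a3], [:: b3; a3], ([:: a3; b3] ++ rw rho_trib r); split => //.
    exact (@isc3 _ _ _ a3 c3 a3 [:: a3; b3] [:: a3] [:: a3; b3] r Hth erefl erefl erefl).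
  + exists [:: a3; b3], [:: a3; b3], ([:: a3] ++ rw rho_trib r); split => //.
    exact (@isc3 _ _ _ a3 c3 a3 [:: a3; b3] [:: a3] [:: b3; a3] r Hth erefl erefl erefl).
  + exists [::], [:: a3; b3], ([:: a3; b3] ++ rw rho_trib r); split => //.
    exact (@isc2 _ _ _ a3 a3 [:: a3; b3] [:: a3; b3] r Hth erefl erefl).
  + exists [:: a3], [:: b3; a3], ([:: b3] ++ rw rho_trib r); split => //.
    exact (@isc2 _ _ _ a3 a3 [:: a3; b3] [:: a3; b3] r Hth erefl erefl).
- move=> s Hs; split; first by move: Hs; rewrite !inE => /orP[|/orP[|/orP[]]] /eqP ->.
  have H2 : forall x y, [:: a3; b3] \in trib_subst a3 -> [:: x; y] \in trib_subst b3 ->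
      in_subst_iter trib_subst 2 [:: a3] [:: a3; b3; x; y].
    move=> x y H1 H2; apply: (in_subst_iter_trans (j := 1) (k := 1) (v := [:: a3; b3])).
      exact: one_step.
    exists [:: a3; b3]; split => //.
    by apply: (isc (p := [:: a3; b3])) => //; rewrite -[[:: x; y]]cats0; apply: isc.
  move: Hs; rewrite !inE => /orP[|/orP[|/orP[]]] /eqP ->.
  + by exists 1, [:: a3; b3]; split; [exact: one_step | exact: infix_refl].
  + by exists 1, [:: b3; a3]; split; [exact: one_step | exact: infix_refl].
  + by exists 2, [:: a3; b3; a3; c3]; split; [exact: H2 | ].
  + by exists 2, [:: a3; b3; c3; a3]; split; [exact: H2 | ].
- exists [:: a3; a3]; split => //; exists 3, [:: a3; b3; a3; c3; a3; a3; b3]; split => //.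
  apply: (in_subst_iter_trans (j := 2) (k := 1) (v := [:: a3; b3; c3; a3])).
    apply: (in_subst_iter_trans (j := 1) (k := 1) (v := [:: a3; b3])); first exact: one_step.
    exists [:: a3; b3]; split => //.
    exact (@isc2 _ _ _ a3 b3 [:: a3; b3] [:: c3; a3] [::] Hth erefl erefl).
  exists [:: a3; b3; c3; a3]; split => //.
  exact (@isc2 _ _ _ a3 b3 [:: a3; b3] [:: a3; c3] [:: c3; a3] Hth erefl erefl).
Qed.

Definition rho_met (m : nat) (c : ab) : seq ab :=
  match c with a_ => nseq m a_ ++ [:: b_] | b_ => [:: a_] end.

Lemma met_mem m i : i <= m -> nseq i a_ ++ b_ :: nseq (m - i) a_ \in metallic_words m.
Proof. by move=> Hi; apply/mapP; exists i => //; rewrite mem_iota. Qed.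

Lemma met_th m c : rho_met m c \in metallic_subst m c.
Proof. by case: c => //=; have := met_mem (leqnn m); rewrite subnn. Qed.

Lemma F_add m x y : rw (rho_met m) (nseq (x + y) a_) =
  rw (rho_met m) (nseq x a_) ++ rw (rho_met m) (nseq y a_).
Proof. by rewrite nseqD rw_cat. Qed.

Lemma F_size m k : size (rw (rho_met m) (nseq k a_)) = k * m.+1.
Proof.
elim: k => //= k IH; rewrite -/(nseq k a_) rw_cons size_cat IH /= size_cat size_nseq /=.
by rewrite mulSn addn1.
Qed.

Lemma nseq_rcons (T : Type) (x : T) k : nseq k x ++ [:: x] = x :: nseq k x.
Proof. by rewrite -[[:: x]]/(nseq 1 x) -nseqD addn1. Qed.

Lemma nseq_split1 (T : Type) k (x : T) X : 0 < k -> nseq k x ++ X = nseq (k - 1) x ++ x :: X.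
Proof.
case: k => // k _; rewrite subn1 /=; by elim: k => //= k ->.
Qed.

Lemma met_local m (hm : 2 <= m) y r p :
  p < size (rw (rho_met m) (rho_met m y)) -> exists T1 s T2,
     [/\ in_subst (metallic_subst m) (rho_met m y ++ a_ :: r) (T1 ++ s ++ T2),
         size T1 = p & s \in metallic_words m].
Proof.
have Hth := met_th m.
set blk := nseq m a_ ++ [:: b_].
have Hblk : blk \in metallic_subst m a_ by exact: (met_th m a_).
case: y => /=.
-
  rewrite rw_cat size_cat F_size -catA addn1 => Hp.
  set F := fun k => rw (rho_met m) (nseq k a_).
  have Hreal : forall B, B \in metallic_subst m a_ ->
      in_subst (metallic_subst m) (nseq m a_ ++ [:: b_] ++ a_ :: r) (F m ++ [:: a_] ++ B ++ rw (rho_met m) r).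
    move=> B HB; apply: in_subst_cat; first exact: in_subst_rw.
    apply: (isc (p := [:: a_])) => //; apply: isc => //; exact: in_subst_rw.
  have [Hlt|Heq] : p < m * m.+1 \/ p = m * m.+1 by lia.
  + set j := p %/ m.+1; set o := p %% m.+1.
    have Hj : j < m by rewrite /j ltn_divLR.
    have Ho : o <= m by rewrite /o -ltnS ltn_mod.
    have [R'' ER] : exists R'', F (m - j.+1) ++ a_ :: blk ++ rw (rho_met m) r = nseq m a_ ++ R''.
      case E: (m - j.+1) => [|q].
        exists (a_ :: b_ :: rw (rho_met m) r); rewrite /F /= /blk -catA /=.
        by rewrite -cat_cons -nseq_rcons -catA.
      exists (b_ :: F q ++ a_ :: blk ++ rw (rho_met m) r).
      by rewrite /F -/(nseq q.+1 a_) /= rw_cons /= /blk -catA /= -catA.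
    exists (F j ++ nseq o a_), (nseq (m - o) a_ ++ b_ :: nseq o a_), (nseq (m - o) a_ ++ R'').
    split.
    * have HF : F m = F j ++ blk ++ F (m - j.+1).
        rewrite {1}(_ : m = j + (1 + (m - j.+1))); last by lia.
        by rewrite /F !F_add (_ : rw (rho_met m) [:: a_] = blk) // /rw /= cats0.
      suff -> : (F j ++ nseq o a_) ++ (nseq (m - o) a_ ++ b_ :: nseq o a_) ++ nseq (m - o) a_ ++ R''
          = F m ++ [:: a_] ++ blk ++ rw (rho_met m) r by exact: Hreal.
      rewrite HF -!catA /=; move: ER; rewrite /blk -catA /= => ->.
      by rewrite -[in RHS](subnKC Ho) nseqD -!catA.
    * by rewrite size_cat F_size size_nseq /j /o -divn_eq.
    * by rewrite -{2}(subKn Ho); apply: met_mem; exact: leq_subr.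
  + exists (F m), (nseq 1 a_ ++ b_ :: nseq (m - 1) a_), ([:: a_] ++ rw (rho_met m) r); split.
    * have := Hreal (nseq 0 a_ ++ b_ :: nseq (m - 0) a_) (met_mem (leq0n m)).
      rewrite subn0 /=.
      by rewrite [nseq m a_ ++ rw _ _]nseq_split1 //; lia.
    * by rewrite F_size Heq.
    * by apply: met_mem; lia.
-
  move=> Hp; move: Hp; rewrite -[[:: a_]]/(nseq 1 a_) F_size mul1n ltnS => Hp.
  exists (nseq p a_), (nseq (m - p) a_ ++ b_ :: nseq p a_), (nseq (m - p) a_ ++ b_ :: rw (rho_met m) r).
  split.
  + have H := @isc2 _ _ _ a_ a_ blk blk r Hth Hblk Hblk.
    suff E : nseq p a_ ++ (nseq (m - p) a_ ++ b_ :: nseq p a_) ++ nseq (m - p) a_ ++ b_ :: rw (rho_met m) r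
      = blk ++ blk ++ rw (rho_met m) r by rewrite E; exact H.
    by rewrite /blk -!catA /= !catA -nseqD subnKC // -!catA -nseqD subnKC.
  + by rewrite size_nseq.
  + by rewrite -{2}(subKn Hp); apply: met_mem; exact: leq_subr.
Qed.

Lemma met_ok m (hm : 2 <= m) : semi_mixing_wrt (metallic_subst m) (metallic_words m).
Proof.
have Hth := met_th m.
have Hrw1 : rw (rho_met m) [:: a_] = nseq m a_ ++ [:: b_] by rewrite /rw /= cats0.
have Hrw2 : rw (rho_met m) [:: b_] = [:: a_] by [].
have Hm : nseq m a_ = a_ :: nseq (m - 1) a_.
  by case: (m) hm => // k _; rewrite subn1.
apply: (semi_gen (rho := rho_met m) (a0 := a_) (t := nseq (m - 1) a_ ++ [:: b_]) (ps := 1)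
   (P0 := [:: a_]) (S0 := nseq (m - 2) a_ ++ [:: b_]) (l := m.+1)).
- exact: Hth.
- by case => //=; rewrite size_cat addn1.
- by rewrite /= Hm.
- by rewrite size_cat addn1.
- by case; [exists (nseq (m - 1) a_ ++ [:: b_]); rewrite /= Hm | exists [::]].
- lia.
- move=> c; rewrite /= Hrw1 rw_cat mem_cat Hrw2 Hm rw_cons mem_cat; case: c.
    by rewrite inE eqxx orbT.
  by rewrite /= mem_cat inE eqxx orbT.
- rewrite /= Hrw1.
  by case: (m) hm => [|[|k]] // _; rewrite subn2.
- by [].
- by rewrite size_cat addn1.
- exact: met_local.
- move=> s Hs; split; last first.
    by exists 1, s; split; [exact: one_step | exact: infix_refl].
  by move: Hs => /mapP [i]; rewrite mem_iota => /andP [_ Hi] ->; rewrite size_cat /= size_nseq size_nseq; lia.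
- exists (nseq m.+1 a_); split.
  + by rewrite size_nseq.
  + apply/negP => /mapP [i _] E.
    have : b_ \in nseq m.+1 a_ by rewrite E mem_cat inE eqxx orbT.
    by rewrite mem_nseq.
  + exists 2, (a_ :: rw (rho_met m) (nseq m a_)); split.
    * apply: (in_subst_iter_trans (j := 1) (k := 1) (v := b_ :: nseq m a_)).
        apply: one_step; have := met_mem (leq0n m); by rewrite subn0.
      exists (b_ :: nseq m a_); split => //.
      exact (@isc _ (metallic_subst m) b_ [:: a_] (nseq m a_) _ erefl (in_subst_rw (nseq m a_) Hth)).
    * rewrite [in rw _ _]Hm rw_cons /= -catA.
      exact: (prefix_infix (nseq m.+1 a_)).
Qed.

Theorem mainTheorem1 (m : nat) (hm : 2 <= m) :
  [/\ semi_mixing_wrt fib_subst [:: [:: a_; b_]; [:: b_; a_]],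
      semi_mixing_wrt trib_subst
        [:: [:: a3; b3]; [:: b3; a3]; [:: a3; c3]; [:: c3; a3]]
    & semi_mixing_wrt (metallic_subst m) (metallic_words m)].
Proof.
split; [exact: fib_ok | exact: trib_ok | exact: met_ok].
Qed.
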